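(* Let $(X,\rho,\mu)$ be a space of homogeneous type, $0<t<1$, and let $x_t$ be an $\varepsilon$-point with $\varepsilon=(2C_\mu)^{-3/t}$; let $u_t$ be the power weight centered at $x_t$. Then for every ball $B=B(x_t,R)$, $$u_t(B)=\int_Bu_t\,d\mu\lesssim\frac{\mu(B)^t}{t}.$$ If moreover $\mu(B(x_t,R))>\varepsilon^{-1}\mu(\{x_t\})$, then $u_t(B)\gtrsim\mu(B)^t/t$. The implicit constants depend only on $C_\mu$ (and $A_0$), not on $t$, $R$.
   Context: $(X,\rho,\mu)$ is a space of homogeneous type: $\rho$ a quasi-metric with $\rho(x,y)\le A_0(\rho(x,z)+\rho(z,y))$, $A_0\ge1$; balls $B(x,r)=\{y:\rho(x,y)<r\}$, with the convention $B(x,0)=\{x\}$; $\mu$ a positive Borel measure with $0<\mu(B(x,2r))\le C_\mu\mu(B(x,r))<\infty$, $C_\mu$ the smallest such constant. A point $x\in X$ is an $\varepsilon$-point ($\varepsilon>0$) if there is $R>0$ with $\mu(B(x,R))>\varepsilon^{-1}\mu(\{x\})$. For $0<t<1$ and a point $x_t$, the power weight is $u_t(x)=\mu(B(x_t,\rho(x,x_t)))^{-(1-t)}$. *)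

(* Defs.v *)
From HB Require Import structures.
From mathcomp Require Import all_boot all_order all_algebra.
From mathcomp Require Import all_classical all_reals all_analysis.
Set Implicit Arguments. Unset Strict Implicit. Unset Printing Implicit Defensive.
Import Order.TTheory GRing.Theory Num.Theory.
Local Open Scope classical_set_scope.
Local Open Scope ring_scope.

Section HT.
Context {d : measure_display} {X : measurableType d} {R : realType}.

Definition quasi_metric (rho : X -> X -> R) (A0 : R) : Prop :=
  [/\ 1 <= A0,
      (forall x y, 0 <= rho x y),
      (forall x y, rho x y = 0 <-> x = y),
      (forall x y, rho x y = rho y x) &
      (forall x y z, rho x y <= A0 * (rho x z + rho z y))].

Definition qball (rho : X -> X -> R) (x : X) (r : R) : set X :=
  if r == 0 then [set x] else [set y | rho x y < r].

Definition doubling (rho : X -> X -> R) (mu : set X -> \bar R) (C : R) : Prop :=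
  forall x r, 0 < r ->
    [/\ (0 < mu (qball rho x (2 * r)))%E,
        (mu (qball rho x (2 * r)) <= C%:E * mu (qball rho x r))%E &
        (mu (qball rho x r) < +oo)%E].

Definition homogeneous_type (rho : X -> X -> R) (A0 : R)
    (mu : {measure set X -> \bar R}) (C : R) : Prop :=
  [/\ quasi_metric rho A0,
      (forall x r, 0 <= r -> measurable (qball rho x r)),
      doubling rho mu C &
      (forall C', doubling rho mu C' -> C <= C')].

Definition eps_point (rho : X -> X -> R) (mu : set X -> \bar R) (eps : R)
    (x : X) : Prop :=
  exists R0 : R, 0 < R0 /\ (mu (qball rho x R0) > eps^-1%:E * mu [set x])%E.

(* Power weight u_t(x) = mu(B(x_t, rho(x, x_t)))^{-(1-t)}, with value +oo
   where the measure vanishes (only possible at x = x_t). *)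
Definition power_weight (rho : X -> X -> R) (mu : set X -> \bar R) (t : R)
    (xt : X) (x : X) : \bar R :=
  let m := mu (qball rho xt (rho x xt)) in
  if fine m == 0 then +oo%E else ((fine m) `^ (- (1 - t)))%:E.

End HT.

(* Main.v *)
Require Import Defs.
From HB Require Import structures.
From mathcomp Require Import all_boot all_order all_algebra.
From mathcomp Require Import all_classical all_reals all_analysis.
From mathcomp Require Import measurable_realfun.
From mathcomp Require Import ring lra.
Import Order.TTheory GRing.Theory Num.Theory.
Local Open Scope classical_set_scope.
Local Open Scope ring_scope.

Section Elem.
Variable R : realType.

Lemma bern (t z : R) : 0 < t < 1 -> 0 <= z -> z `^ t <= t * z + (1 - t).
Proof.
move=> /andP[t0 t1] z0.
have := @conjugate_powR R (z `^ t) 1 t^-1 (1 - t)^-1 (powR_ge0 _ _) ler01.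
rewrite invr_gt0 t0 invr_gt0 subr_gt0 t1 => /(_ isT isT); rewrite !invrK.
idtac.
rewrite addrC subrK => /(_ erefl).
rewrite mulr1 -powRrM mulfV ?gt_eqF // powRr1 // powR1 mul1r mulrC.
by [].
Qed.

Lemma tangent (t x y : R) : 0 < t < 1 -> 0 < x -> 0 <= y ->
  y `^ t <= x `^ t + t * (x `^ t / x) * (y - x).
Proof.
move=> t01 x0 y0.
have -> : y = x * (y / x) by rewrite mulrC divfK ?gt_eqF.
rewrite powRM; last 2 first.
- exact: ltW.
- exact: divr_ge0 y0 (ltW x0).
have h := @bern t (y / x) t01 (divr_ge0 y0 (ltW x0)).
apply: le_trans (ler_wpM2l (powR_ge0 x t) h) _.
rewrite le_eqVlt; apply/orP; left; apply/eqP.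
by field; rewrite gt_eqF.
Qed.

Lemma powR_le (t a b : R) : 0 <= t -> 0 <= a -> a <= b -> a `^ t <= b `^ t.
Proof.
move=> t0 a0 ab; apply: (ge0_ler_powR t0) => //; rewrite nnegrE //.
exact: le_trans ab.
Qed.

Lemma ub_step (t a b : R) : 0 < t < 1 -> 0 <= b -> b <= a -> 0 < a ->
  (a `^ t / a) * (a - b) <= (a `^ t - b `^ t) / t.
Proof.
move=> t01 b0 ba a0; have := @tangent t a b t01 a0 b0.
have t0 : 0 < t by case/andP: t01.
rewrite ler_pdivlMr // => h.
have -> : a `^ t / a * (a - b) * t = a `^ t - (a `^ t + t * (a `^ t / a) * (b - a)).
  by ring.
by apply: lerB.
Qed.

Lemma lb_step (t C a b : R) : 0 < t < 1 -> 0 < b -> b <= a -> a <= C * b ->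
  (a `^ t - b `^ t) / t <= C * (a `^ t / a) * (a - b).
Proof.
move=> t01 b0 ba aC; have := @tangent t b a t01 b0 (ltW (lt_le_trans b0 ba)).
have t0 : 0 < t by case/andP: t01.
have a0 : 0 < a := lt_le_trans b0 ba.
rewrite ler_pdivrMr // => h.
have h2 : b `^ t / b <= C * (a `^ t / a).
  rewrite mulrCA; apply: ler_pM.
  - exact: powR_ge0.
  - by rewrite invr_ge0 ltW.
  - exact: powR_le (ltW t0) (ltW b0) ba.
  - by rewrite ler_pdivlMr // mulrC ler_pdivrMr.
have : a `^ t - b `^ t <= t * (b `^ t / b) * (a - b) by rewrite lerBlDl.
move=> h3; apply: (le_trans h3).
have -> : C * (a `^ t / a) * (a - b) * t = t * (C * (a `^ t / a)) * (a - b) by ring.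
apply: ler_wpM2r; first by rewrite subr_ge0.
by apply: ler_wpM2l => //; exact: ltW.
Qed.

Lemma dec_pow (t F a : R) : 0 < t < 1 -> 0 < F -> F <= a -> a `^ t / a <= F `^ t / F.
Proof.
move=> /andP[t0 t1] F0 Fa.
have a0 : 0 < a := lt_le_trans F0 Fa.
have -> : a = F * (a / F) by rewrite mulrC divfK ?gt_eqF.
have q0 : 0 <= a / F by rewrite divr_ge0 // ltW.
rewrite powRM ?(ltW F0) //.
have q1 : 1 <= a / F by rewrite ler_pdivlMr // mul1r.
have := ler1_powR q1 (ltW t1) => h.
rewrite invfM mulrACA -[leRHS]mulr1; apply: ler_wpM2l; first by rewrite divr_ge0 ?powR_ge0 // ltW.
rewrite ler_pdivrMr; last by apply: lt_le_trans q1.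
by rewrite mul1r.
Qed.

Lemma ub_pow (t C F a : R) : 0 < t < 1 -> 0 < F -> F <= a -> a <= C * F ->
  F `^ t / F <= C * (a `^ t / a).
Proof.
move=> /andP[t0 t1] F0 Fa aC.
have a0 : 0 < a := lt_le_trans F0 Fa.
rewrite mulrCA; apply: ler_pM.
- exact: powR_ge0.
- by rewrite invr_ge0 ltW.
- exact: powR_le (ltW t0) (ltW F0) Fa.
- by rewrite ler_pdivlMr // mulrC ler_pdivrMr.
Qed.
End Elem.


Lemma mono_int d (T : measurableType d) (R : realType)
  (mu : {measure set T -> \bar R}) (D : set T) (f g : T -> \bar R) :
  (forall x, D x -> (0 <= f x)%E) -> (forall x, D x -> (f x <= g x)%E) ->
  (\int[mu]_(x in D) f x <= \int[mu]_(x in D) g x)%E.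
Proof.
move=> f0 fg.
have g0 : forall x, D x -> (0 <= g x)%E by move=> x Dx; exact: le_trans (f0 x Dx) (fg x Dx).
rewrite !(integral_mkcond D) !ge0_integralTE; last 2 first.
- exact: erestrict_ge0.
- exact: erestrict_ge0.
apply: ereal_sup_le => _ [h hf <-]; exists h => //= x.
exact: le_trans (hf x) (lee_restrict fg x).
Qed.

Section Balls.
Context {d : measure_display} {X : measurableType d} {R : realType}.
Variables (rho : X -> X -> R) (A0 C : R) (mu : {measure set X -> \bar R}) (xt : X).
Hypothesis HT : homogeneous_type rho A0 mu C.

Let QM : quasi_metric rho A0. Proof. by case: HT. Qed.
Lemma rho_ge0 x y : 0 <= rho x y. Proof. by case: QM. Qed.
Lemma rho_eq0 x y : rho x y = 0 <-> x = y. Proof. by case: QM. Qed.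
Lemma rhoC x y : rho x y = rho y x. Proof. by case: QM. Qed.
Lemma mball r : 0 <= r -> measurable (qball rho xt r). Proof. by case: HT => _ h _ _; exact: h. Qed.
Let DB : doubling rho mu C. Proof. by case: HT. Qed.

Lemma qball0 : qball rho xt 0 = [set xt]. Proof. by rewrite /qball eqxx. Qed.
Lemma qballE r : 0 < r -> qball rho xt r = [set y | rho xt y < r].
Proof. by move=> r0; rewrite /qball gt_eqF. Qed.

Lemma ball_sub r s : 0 <= r -> r <= s -> qball rho xt r `<=` qball rho xt s.
Proof.
move=> r0 rs; have [r00|r0'] := eqVneq r 0.
  subst r.
  rewrite qball0; have [->|s0] := eqVneq s 0; first by rewrite qball0.
  have s0' : 0 < s by rewrite lt0r s0 rs.
  rewrite qballE // => y -> /=.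
  by rewrite (proj2 (rho_eq0 xt xt) erefl).
have r0s : 0 < r by rewrite lt0r r0' r0.
rewrite !qballE //; last exact: lt_le_trans rs.
by move=> y /= h; exact: lt_le_trans rs.
Qed.

Lemma mu_fin r : 0 <= r -> (mu (qball rho xt r) < +oo)%E.
Proof.
move=> r0; have r1 : 0 < r + 1 by rewrite ltr_wpDl.
have [_ _ h] := DB xt (r+1) r1.
apply: le_lt_trans h; apply: le_measure; rewrite ?inE; try exact: mball.
- by apply: mball; lra.
- by apply: ball_sub => //; lra.
Qed.

Lemma mu_pos {r} : 0 < r -> (0 < mu (qball rho xt r))%E.
Proof.
move=> r0; have r2 : 0 < r / 2 by rewrite divr_gt0.
have [h _ _] := DB xt (r/2) r2.
by move: h; rewrite mulrC divfK.
Qed.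

Definition m r := fine (mu (qball rho xt r)).

Lemma muE {r} : 0 <= r -> mu (qball rho xt r) = (m r)%:E.
Proof.
move=> r0; rewrite /m fineK // ge0_fin_numE ?mu_fin //.
Qed.

Lemma m_ge0 r : 0 <= m r. Proof. exact: fine_ge0. Qed.

Lemma m_gt0 {r} : 0 < r -> 0 < m r.
Proof. by move=> r0; have := mu_pos r0; rewrite muE ?ltW // lte_fin. Qed.

Lemma m_le r s : 0 <= r -> r <= s -> m r <= m s.
Proof.
move=> r0 rs; rewrite -lee_fin -!muE //; last exact: le_trans rs.
apply: le_measure; rewrite ?inE; try exact: mball; last exact: ball_sub.
by apply: mball; exact: le_trans rs.
Qed.

Lemma m_dbl {r} : 0 < r -> m (2 * r) <= C * m r.
Proof.
move=> r0; have [_ h _] := DB xt r r0.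
move: h; rewrite (muE (ltW r0)) muE; last by rewrite mulr_ge0 // ltW.
by rewrite -EFinM lee_fin.
Qed.

Lemma C_ge1 : 1 <= C.
Proof.
have h1 := m_gt0 (ltr01 : (0:R) < 1).
have := m_dbl (ltr01 : (0:R) < 1); rewrite mulr1 => h.
have : m 1 <= C * m 1.
  apply: le_trans h; apply: m_le => //; lra.
by rewrite -{1}[m 1]mul1r ler_pM2r.
Qed.

Variable R0 : R.
Hypothesis R0pos : 0 < R0.

Definition rk (k : nat) := R0 / 2 ^+ k.
Lemma rk_gt0 k : 0 < rk k. Proof. by rewrite divr_gt0 // exprn_gt0. Qed.
Lemma rk0 : rk 0 = R0. Proof. by rewrite /rk expr0 divr1. Qed.
Lemma rkS k : rk k = 2 * rk k.+1.
Proof. rewrite /rk exprS; field; by rewrite expf_neq0. Qed.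
Lemma rk_le j k : (j <= k)%N -> rk k <= rk j.
Proof.
move=> /subnK <-; elim: (k - j)%N => [|n IH]; first by rewrite add0n.
rewrite addSn; apply: le_trans IH; rewrite [X in _ <= X]rkS.
have := rk_gt0 (n + j).+1; lra.
Qed.

Lemma archi_rk {rr} : 0 < rr -> exists n, rk n.+1 <= rr.
Proof.
move=> rr0; have h := archi_boundP (ltW (divr_gt0 R0pos rr0)).
exists (Num.bound (R0 / rr)); rewrite /rk ler_pdivrMr ?exprn_gt0 //.
rewrite mulrC -ler_pdivrMr //; apply: (le_trans (ltW h)).
rewrite -natrX ler_nat; apply: ltnW; apply: leq_trans (@ltn_expl 2 _ isT) _.
by rewrite leq_exp2l.
Qed.

Definition An k := qball rho xt (rk k) `\` qball rho xt (rk k.+1).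

Lemma AnE k x : An k x <-> rho xt x < rk k /\ rk k.+1 <= rho xt x.
Proof.
rewrite /An !qballE ?rk_gt0 //=; split; first by case=> h1 /negP; rewrite -leNgt.
by case=> h1 h2; split => //; apply/negP; rewrite -leNgt.
Qed.

Lemma mAn k : measurable (An k).
Proof. by apply: measurableD; apply: mball; exact: ltW (rk_gt0 _). Qed.

Lemma An_sub k : An k `<=` qball rho xt R0.
Proof.
move=> x /AnE [h _]; rewrite qballE //=; apply: lt_le_trans h _.
by rewrite -rk0; apply: rk_le.
Qed.

Lemma An_disj j k x : An j x -> An k x -> j = k.
Proof.
move=> /AnE [h1 h2] /AnE [h3 h4]; apply/eqP; rewrite eqn_leq; apply/andP; split.
  rewrite leqNgt; apply/negP => kj; have := @rk_le k.+1 j kj; lra.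
rewrite leqNgt; apply/negP => jk; have := @rk_le j.+1 k jk; lra.
Qed.

Lemma find_k x : x <> xt -> qball rho xt R0 x -> exists k, An k x.
Proof.
move=> xnt; rewrite qballE //= => xR.
have r0 : 0 < rho xt x.
  rewrite lt0r rho_ge0 andbT; apply/eqP => /rho_eq0 h; by apply: xnt.
have ex := archi_rk r0.
case: (ex_minnP ex) => n Hn Hmin; exists n; apply/AnE; split => //.
case: n Hn Hmin => [|k] Hn Hmin; first by rewrite rk0.
rewrite ltNge; apply/negP => H; have := Hmin _ H; by rewrite ltnn.
Qed.

Lemma xt_notin_An k : ~ An k xt.
Proof. by move=> /AnE [_]; rewrite (proj2 (rho_eq0 xt xt) erefl); have := rk_gt0 k.+1; lra. Qed.

Lemma bigcap_rk : \bigcap_n qball rho xt (rk n) = [set xt].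
Proof.
apply/seteqP; split => x.
  move=> h; apply: contrapT => xnt.
  have r0 : 0 < rho xt x.
    rewrite lt0r rho_ge0 andbT; apply/eqP => /rho_eq0 h'; by apply: xnt; rewrite h'.
  have [n hn] := archi_rk r0; have := h n.+1 Logic.I; rewrite qballE ?rk_gt0 //=.
  lra.
move=> -> n _; rewrite qballE ?rk_gt0 //= (proj2 (rho_eq0 xt xt) erefl).
exact: rk_gt0.
Qed.


Variable t : R.
Hypothesis t01 : 0 < t < 1.

Let u := power_weight rho mu t xt.

Lemma uE x : u x = if m (rho xt x) == 0 then +oo%E else ((m (rho xt x)) `^ (t - 1))%:E.
Proof. by rewrite /u /power_weight rhoC opprB. Qed.

Lemma u_ge0 x : (0 <= u x)%E.
Proof. rewrite uE; case: ifP => _ //; rewrite lee_fin; exact: powR_ge0. Qed.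

Lemma u_xt : u xt = if m 0 == 0 then +oo%E else ((m 0) `^ (t - 1))%:E.
Proof. by rewrite uE (proj2 (rho_eq0 xt xt) erefl). Qed.

Lemma u_An k x : An k x ->
  (((m (rk k)) `^ t / m (rk k))%:E <= u x /\ u x <= (C * ((m (rk k)) `^ t / m (rk k)))%:E)%E.
Proof.
move=> /AnE [h1 h2].
have r0 : 0 < rho xt x by apply: lt_le_trans h2; exact: rk_gt0.
have F0 : 0 < m (rho xt x) := m_gt0 r0.
have Fa : m (rho xt x) <= m (rk k) by apply: m_le; [exact: ltW|exact: ltW].
have aC : m (rk k) <= C * m (rho xt x).
  rewrite rkS; apply: le_trans (m_dbl (rk_gt0 k.+1)) _.
  apply: ler_wpM2l; first by have := C_ge1; lra.
  by apply: m_le => //; exact: ltW (rk_gt0 _).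
rewrite uE gt_eqF // powRB; last by apply/implyP => _; rewrite gt_eqF.
rewrite powRr1; last exact: ltW.
rewrite !lee_fin; split; first exact: dec_pow.
exact: ub_pow.
Qed.


Lemma mk_le k : m (rk k.+1) <= m (rk k).
Proof. by apply: m_le; [exact: ltW (rk_gt0 _)| apply: rk_le]. Qed.

Lemma mk_gt0 k : 0 < m (rk k). Proof. exact: m_gt0 (rk_gt0 k). Qed.

Lemma mk_dbl k : m (rk k) <= C * m (rk k.+1).
Proof. by rewrite rkS; apply: m_dbl; exact: rk_gt0. Qed.

Lemma sum_ub N : \sum_(0 <= k < N) C * (m (rk k) `^ t / m (rk k)) * (m (rk k) - m (rk k.+1))
  <= C * (m R0 `^ t - m (rk N) `^ t) / t.
Proof.
have C1 := C_ge1; have t0 : 0 < t by case/andP: t01.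
elim: N => [|N IH]; first by rewrite big_geq // rk0 subrr mulr0 mul0r.
rewrite big_nat_recr //=.
have h := @ub_step R t (m (rk N)) (m (rk N.+1)) t01 (m_ge0 _) (mk_le N) (mk_gt0 N).
have h' : C * (m (rk N) `^ t / m (rk N)) * (m (rk N) - m (rk N.+1)) <=
          C * ((m (rk N) `^ t - m (rk N.+1) `^ t) / t).
  by rewrite -mulrA; apply: ler_wpM2l => //; lra.
apply: le_trans (lerD IH h') _; rewrite le_eqVlt; apply/orP; left; apply/eqP.
by field; rewrite gt_eqF.
Qed.

Lemma sum_lb N : (m R0 `^ t - m (rk N) `^ t) / (t * C) <=
  \sum_(0 <= k < N) (m (rk k) `^ t / m (rk k)) * (m (rk k) - m (rk k.+1)).
Proof.
have C1 := C_ge1; have t0 : 0 < t by case/andP: t01.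
elim: N => [|N IH]; first by rewrite big_geq // rk0 subrr mul0r.
rewrite big_nat_recr //=.
have h := @lb_step R t C (m (rk N)) (m (rk N.+1)) t01 (mk_gt0 N.+1) (mk_le N) (mk_dbl N).
have h' : (m (rk N) `^ t - m (rk N.+1) `^ t) / (t * C) <=
          (m (rk N) `^ t / m (rk N)) * (m (rk N) - m (rk N.+1)).
  rewrite invfM mulrA ler_pdivrMr; last lra.
  by rewrite [X in _ <= X]mulrC mulrA.
apply: le_trans (lerD IH h'); rewrite le_eqVlt; apply/orP; left; apply/eqP.
field; apply/andP; split; rewrite gt_eqF //; lra.
Qed.


Lemma mu_An k : mu (An k) = (m (rk k) - m (rk k.+1))%:E.
Proof.
rewrite /An measureD; try (apply: mball; exact: ltW (rk_gt0 _)).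
  rewrite setIidr; last by apply: ball_sub; [exact: ltW (rk_gt0 _)| apply: rk_le].
  apply: (@eq_trans _ _ ((m (rk k))%:E - (m (rk k.+1))%:E)%E); last by rewrite EFinB.
  by congr (_ - _)%E; apply: muE; exact: ltW (rk_gt0 _).
exact: mu_fin _ (ltW (rk_gt0 k)).
Qed.

Lemma meas_indicE (D A : set X) : measurable A -> measurable_fun D ((fun x => (\1_A x)%:E) : X -> \bar R).
Proof. by move=> mA; apply/measurable_EFinP; exact: measurable_indic. Qed.

Lemma int_An k : (\int[mu]_(x in qball rho xt R0) (\1_(An k) x)%:E = mu (An k))%E.
Proof.
rewrite integral_indic.
- by rewrite classical_sets.setIidl //; exact: An_sub.
- by apply: mball; exact: ltW.
- exact: mAn.
Qed.

Lemma mxt : mu [set xt] = (m 0)%:E.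
Proof. by rewrite -qball0 muE. Qed.

Lemma int_atom (D : set X) : measurable D -> D xt ->
  (\int[mu]_(x in D) (u xt * (\1_[set xt] x)%:E) <= ((m 0) `^ t)%:E)%E.
Proof.
move=> mD Dxt.
have mx : measurable [set xt] by rewrite -qball0; exact: mball.
have mf := meas_indicE D _ mx.
rewrite (ge0_integralZl _ mD mf); last 2 first.
- by move=> x _; rewrite lee_fin indicE; case: (x \in _).
- exact: u_ge0.
rewrite integral_indic //.
rewrite setIidl; last by move=> x ->.
rewrite mxt u_xt; case: ifPn => [/eqP ->|m0].
  by rewrite mule0 lee_fin powR_ge0.
rewrite -EFinM lee_fin mulrC mulr_powRB1 //; first exact: m_ge0.
by case/andP: t01.
Qed.


Definition fser (n : nat) (x : X) : \bar R :=
  if n is k.+1 then ((C * (m (rk k) `^ t / m (rk k)))%:E * (\1_(An k) x)%:E)%E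
  else (u xt * (\1_[set xt] x)%:E)%E.

Lemma coef_ge0 k : 0 <= C * (m (rk k) `^ t / m (rk k)).
Proof.
have C1 := C_ge1; apply: mulr_ge0; first lra.
by apply: divr_ge0; [exact: powR_ge0|exact: m_ge0].
Qed.

Lemma fser_ge0 n x : (0 <= fser n x)%E.
Proof.
case: n => [|k] /=; apply: mule_ge0; rewrite ?lee_fin ?indicE; try (by case: (x \in _)).
- exact: u_ge0.
- exact: coef_ge0.
Qed.

Lemma fser_meas (D : set X) n : measurable_fun D (fser n).
Proof.
have mx : measurable [set xt] by rewrite -qball0; exact: mball.
case: n => [|k] /=; apply: measurable_funeM; apply: meas_indicE => //; exact: mAn.
Qed.

Lemma upper : (\int[mu]_(x in qball rho xt R0) u x <= ((m 0) `^ t + C * (m R0) `^ t / t)%:E)%E.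
Proof.
have mB : measurable (qball rho xt R0) by apply: mball; exact: ltW.
have C1 := C_ge1; have t0 : 0 < t by case/andP: t01.
apply: (@le_trans _ _ (\int[mu]_(x in qball rho xt R0) \sum_(n <oo) fser n x)%E).
  apply: mono_int => x Bx; first exact: u_ge0.
  have [->|xnt] := pselect (x = xt).
    apply: le_trans (nneseries_lim_ge 1 _); last by move=> n _ _; exact: fser_ge0.
    by rewrite big_nat1 /= indicE mem_set // mule1.
  have [k xk] := find_k _ xnt Bx.
  apply: le_trans (nneseries_lim_ge k.+2 _); last by move=> n _ _; exact: fser_ge0.
  rewrite big_nat_recr //=; apply: lee_paddl.
    by apply: sume_ge0 => n _; exact: fser_ge0.
  rewrite indicE mem_set // mule1; exact: (proj2 (u_An _ _ xk)).
rewrite (@integral_nneseries _ _ _ mu _ mB fser); last 2 first.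
- by move=> n; exact: fser_meas.
- by move=> n x _; exact: fser_ge0.
apply: lime_le; first by apply: is_cvg_nneseries => n _ _; apply: integral_ge0 => x _; exact: fser_ge0.
apply: nearW => N.
have b0 : (0 <= (m 0 `^ t + C * m R0 `^ t / t)%:E)%E.
  rewrite lee_fin addr_ge0 ?powR_ge0 // divr_ge0 ?mulr_ge0 ?powR_ge0 //; lra.
case: N => [|N]; first by rewrite big_geq.
rewrite big_nat_recl //= EFinD; apply: leeD.
  by apply: int_atom => //; rewrite qballE //= (proj2 (rho_eq0 xt xt) erefl).
have -> : (\sum_(0 <= i < N) \int[mu]_(x in qball rho xt R0) fser i.+1 x =
  (\sum_(0 <= k < N) C * (m (rk k) `^ t / m (rk k)) * (m (rk k) - m (rk k.+1)))%:E)%E.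
  rewrite -sumEFin; apply: eq_bigr => k _ /=.
  rewrite (ge0_integralZl _ mB (meas_indicE _ _ (mAn k))); last 2 first.
  - by move=> x _; rewrite lee_fin indicE; case: (x \in _).
  - by rewrite lee_fin; exact: coef_ge0.
  by rewrite int_An mu_An -EFinM.
rewrite lee_fin; apply: le_trans (sum_ub N) _.
rewrite ler_pM2r ?invr_gt0 //; apply: ler_wpM2l; first lra.
rewrite gerBl; exact: powR_ge0.
Qed.


Lemma indic_An0 k x : ~ An k x -> ((\1_(An k) x)%:E = 0 :> \bar R)%E.
Proof. by move=> h; rewrite indicE memNset. Qed.

Lemma lower N : (((m R0 `^ t - m (rk N) `^ t) / (t * C))%:E <=
   \int[mu]_(x in qball rho xt R0) u x)%E.
Proof.
have mB : measurable (qball rho xt R0) by apply: mball; exact: ltW.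
have C1 := C_ge1; have t0 : 0 < t by case/andP: t01.
pose g k x := (((m (rk k) `^ t / m (rk k)))%:E * (\1_(An k) x)%:E)%E.
have g0 k x : (0 <= g k x)%E.
  apply: mule_ge0; rewrite lee_fin ?indicE; last by case: (x \in _).
  by apply: divr_ge0; [exact: powR_ge0|exact: m_ge0].
have gm k : measurable_fun (qball rho xt R0) (g k).
  by apply: measurable_funeM; apply: meas_indicE; exact: mAn.
apply: (@le_trans _ _ (\int[mu]_(x in qball rho xt R0) \sum_(0 <= k < N) g k x)%E); last first.
  apply: mono_int => x Bx; first by apply: sume_ge0 => k _; exact: g0.
  have [[j [jN xj]]|nex] := pselect (exists j, (j < N)%N /\ An j x).
    rewrite (bigD1_seq j) ?iota_uniq ?mem_index_iota //=.
    rewrite big1 ?adde0; last first.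
      move=> i ij; rewrite /g indic_An0 ?mule0 //.
      by move=> xi; move/eqP: ij; apply; exact: An_disj xi xj.
    by rewrite /g indicE mem_set // mule1; exact: (proj1 (u_An _ _ xj)).
  rewrite big_seq big1; first exact: u_ge0.
  move=> i; rewrite mem_index_iota => /andP [_ iN]; rewrite /g indic_An0 ?mule0 //.
  by move=> xi; apply: nex; exists i.
rewrite ge0_integral_sum //.
have -> : (\sum_(0 <= k < N) \int[mu]_(x in qball rho xt R0) g k x =
  (\sum_(0 <= k < N) (m (rk k) `^ t / m (rk k)) * (m (rk k) - m (rk k.+1)))%:E)%E.
  rewrite -sumEFin; apply: eq_bigr => k _ /=.
  rewrite (ge0_integralZl _ mB (meas_indicE _ _ (mAn k))); last 2 first.
  - by move=> x _; rewrite lee_fin indicE; case: (x \in _).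
  - by rewrite lee_fin; apply: divr_ge0; [exact: powR_ge0|exact: m_ge0].
  by rewrite int_An mu_An -EFinM.
by rewrite lee_fin; exact: sum_lb.
Qed.


Lemma conv_m (z : R) : m 0 < z -> exists N, m (rk N) < z.
Proof.
move=> z0.
have h := @nonincreasing_cvg_mu _ _ _ mu (fun n => qball rho xt (rk n)).
have := h (mu_fin _ (ltW (rk_gt0 0))) (fun n => mball _ (ltW (rk_gt0 n))).
rewrite bigcap_rk mxt => /(_ (eq_ind _ _ (mball _ (lexx 0)) _ qball0)).
have noninc : nonincreasing_seq (fun n => qball rho xt (rk n)).
  move=> a b ab; apply/subsetPset; apply: ball_sub; first exact: ltW (rk_gt0 _).
  exact: rk_le.
move=> /(_ noninc) /fine_cvgP [_ hf].
have := cvgr_lt _ hf _ z0.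
case=> N _ HN; exists N; exact: HN N (leqnn N).
Qed.

End Balls.

Lemma theta_facts (R : realType) (C t : R) : 1 <= C -> 0 < t < 1 ->
  1 <= ((2 * C) `^ (- (3 / t)))^-1 /\ 2 <= (((2 * C) `^ (- (3 / t)))^-1) `^ t.
Proof.
move=> C1 /andP[t0 t1].
have C2 : 1 <= 2 * C by lra.
rewrite powRN invrK; split.
  rewrite -[X in X <= _](powRr0 (2 * C)); apply: ler_powR => //.
  by rewrite divr_ge0 // ltW.
rewrite -powRrM divfK ?gt_eqF //.
apply: le_trans (le1r_powR C2 _); first lra.
lra.
Qed.

Lemma small_pow (R : realType) (th mN M t : R) : 0 < th -> 0 <= mN -> 0 < t ->
  2 <= th `^ t -> th * mN < M -> mN `^ t <= M `^ t / 2.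
Proof.
move=> th0 mN0 t0 th2 hlt.
have h : (th * mN) `^ t <= M `^ t.
  apply: powR_le; [exact: ltW|exact: mulr_ge0 (ltW th0) mN0|exact: ltW].
rewrite powRM ?(ltW th0) // in h.
rewrite ler_pdivlMr //.
apply: le_trans h; rewrite mulrC; apply: ler_wpM2r => //; exact: powR_ge0.
Qed.

Theorem lemma8p3 (R : realType) (A0 C : R) :
  1 <= A0 ->
  exists c1 c2 : R, 0 < c1 /\ 0 < c2 /\
  forall (d : measure_display) (X : measurableType d) (rho : X -> X -> R)
         (mu : {measure set X -> \bar R}) (t : R) (xt : X),
    homogeneous_type rho A0 mu C ->
    0 < t < 1 ->
    eps_point rho mu ((2 * C) `^ (- (3 / t))) xt ->
    forall R0 : R, 0 <= R0 ->
      let B := qball rho xt R0 in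
      (\int[mu]_(x in B) power_weight rho mu t xt x
         <= (c1 * (fine (mu B)) `^ t / t)%:E)%E /\
      ((mu B > ((2 * C) `^ (- (3 / t)))^-1%:E * mu [set xt])%E ->
       ((c2 * (fine (mu B)) `^ t / t)%:E
         <= \int[mu]_(x in B) power_weight rho mu t xt x)%E).
Proof.
move=> _; have Cn := normr_ge0 C.
exists (`|C| + 1), ((2 * (`|C| + 1))^-1); split; first lra.
split; first by rewrite invr_gt0; lra.
move=> d X rho mu t xt HT t01 _ R0 R00 B.
have C1 := @C_ge1 _ _ _ rho A0 C mu xt HT.
have t0 : 0 < t by case/andP: t01.
have t1 : t < 1 by case/andP: t01.
rewrite ger0_norm in Cn *; last lra.
have [th1 th2] := @theta_facts R C t C1 t01.
set th := ((2 * C) `^ (- (3 / t)))^-1 in th1 th2 *.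
have -> : fine (mu B) = m rho mu xt R0 by [].
set M := m rho mu xt R0.
set m0 := m rho mu xt 0.
have m0M : m0 <= M by apply: (@m_le _ _ _ rho A0 C mu xt HT).
have m00 : 0 <= m0 by apply: m_ge0.
have mxtE := @mxt _ _ _ rho A0 C mu xt HT.
have MtE : 0 <= M `^ t by apply: powR_ge0.
have m0t : m0 `^ t <= M `^ t by apply: powR_le => //; exact: ltW.
have Mt_t : M `^ t <= M `^ t / t by rewrite ler_pdivlMr // ler_piMr // ltW.
have [R0e|R0p] := eqVneq R0 0.
  have BE : B = [set xt] by rewrite /B R0e qball0.
  have -> : M = m0 by rewrite /M R0e.
  split; last first.
    rewrite BE mxtE -EFinM lte_fin => h; exfalso.
    have : m0 <= th * m0 by rewrite ler_peMl.
    rewrite -/m0 in h; lra.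
  rewrite BE.
  apply: (@le_trans _ _ (\int[mu]_(x in [set xt]) (power_weight rho mu t xt xt * (\1_[set xt] x)%:E))%E).
    apply: mono_int => x ->; first exact: (@u_ge0 _ _ _ rho A0 C mu xt HT t xt).
    by rewrite indicE mem_set // mule1.
  apply: le_trans (@int_atom _ _ _ rho A0 C mu xt HT t t01 [set xt] _ _) _.
  - by rewrite -(qball0 rho xt); apply: (@mball _ _ _ rho A0 C mu xt HT).
  - by [].
  rewrite lee_fin -/m0.
  have : m0 `^ t <= m0 `^ t / t by rewrite ler_pdivlMr // ler_piMr ?powR_ge0 // ltW.
  move=> h; apply: le_trans h _; rewrite ler_pM2r ?invr_gt0 // ler_peMl ?powR_ge0 //; lra.
have R0pos : 0 < R0 by rewrite lt0r R0p R00.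
split.
  apply: le_trans (@upper _ _ _ rho A0 C mu xt HT R0 R0pos t t01) _.
  rewrite lee_fin -/m0 -/M.
  have -> : (C + 1) * M `^ t / t = M `^ t / t + C * M `^ t / t by field; rewrite gt_eqF.
  by apply: lerD => //; exact: le_trans m0t Mt_t.
rewrite /B (@muE _ _ _ rho A0 C mu xt HT R0 R00) mxtE -/m0 -/M -EFinM lte_fin => hlt.
have th0 : 0 < th by lra.
have z0 : m0 < M / th by rewrite ltr_pdivlMr // mulrC.
have [N hN] := @conv_m _ _ _ rho A0 C mu xt HT R0 R0pos _ z0.
have hN' : th * m rho mu xt (rk R0 N) < M by rewrite mulrC -ltr_pdivlMr.
have small := @small_pow R th _ M t th0 (m_ge0 _ _ _ _) t0 th2 hN'.
apply: le_trans (@lower _ _ _ rho A0 C mu xt HT R0 R0pos t t01 N).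
rewrite lee_fin.
apply: (@le_trans _ _ ((M `^ t / 2) / (t * C))).
  have -> : M `^ t / 2 / (t * C) = (2 * C)^-1 * M `^ t / t.
    by field; rewrite !gt_eqF //; lra.
  apply: ler_wpM2r; first by rewrite invr_ge0 ltW.
  apply: ler_wpM2r => //.
  rewrite lef_pV2 ?posrE; lra.
by rewrite ler_pM2r ?invr_gt0 ?mulr_gt0 //; lra.
Qed.
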